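(* Let $Y$ be a countable linear order, $F=\{a_0<\dots<a_{m-1}\}\in\mathsf{age}(Y)$, and $\alpha$ an ordinal. Then $\mathsf{rk}_Y(F)\ge\alpha$ if and only if $\mathsf{rk}(I_j)\ge\alpha$ for every interval $I_j$ ($0\le j\le m$) of $F$ in $Y$, each interval being regarded as a linear order in its own right. In particular, $\mathsf{rk}_Y(F)=\min\{\mathsf{rk}(I_j):0\le j\le m\}$.
   Context: The intervals of $F=\{a_0<\dots<a_{m-1}\}$ in $Y$ are $I_0=\{y\in Y:y<a_0\}$, $I_k=\{y\in Y:a_{k-1}<y<a_k\}$ for $1\le k\le m-1$, and $I_m=\{y\in Y:y>a_{m-1}\}$; if $F=\emptyset$ there is the single interval $I_0=Y$. Let $\mathcal F$ be the class of finite linear orders (language $\{<\}$); countable linear orders are the structures considered; substructures are suborders and $\mathsf{age}(X)$ is the set of finite suborders of $X$. For $A\le B$, $B$ is a prime extension of $A$ if $|B\setminus A|=1$; a realization of $B$ in $X$ (where $A\le X$) is $C\le X$ with $A\le C$ and an order-isomorphism $B\to C$ fixing $A$ pointwise. For $F\in\mathsf{age}(X)$ define by recursion: $\mathsf{rk}_X(F)\ge0$ always; $\mathsf{rk}_X(F)\ge\alpha+1$ iff every prime extension $B\in\mathcal F$ of $F$ has a realization $C$ in $X$ with $\mathsf{rk}_X(C)\ge\alpha$; for limit $\alpha$, $\mathsf{rk}_X(F)\ge\alpha$ iff $\mathsf{rk}_X(F)\ge\beta$ for all $\beta<\alpha$. $\mathsf{rk}_X(F)=\sup\{\alpha:\mathsf{rk}_X(F)\ge\alpha\}$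 (or $\infty$, larger than all ordinals), and $\mathsf{rk}(X)=\mathsf{rk}_X(\emptyset)$. *)

(* Defs.v *)
(* Linear orders are types with a strict order relation;
   ordinals are represented by elements of an arbitrary well-ordered type. *)
From Stdlib Require Import List Sorted.
Import ListNotations.

Set Implicit Arguments.

Definition strict_linear_order (X : Type) (lt : X -> X -> Prop) : Prop :=
  (forall x, ~ lt x x) /\
  (forall x y z, lt x y -> lt y z -> lt x z) /\
  (forall x y, lt x y \/ x = y \/ lt y x).

Definition countable_type (X : Type) : Prop :=
  exists f : X -> nat, forall x y, f x = f y -> x = y.

(** Finite subsets (elements of the age, as subsets of X). *)
Definition finite_set (X : Type) (A : X -> Prop) : Prop :=
  exists l : list X, forall x, A x <-> In x l.

Definition finite_type (T : Type) : Prop :=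
  exists l : list T, forall t, In t l.

Definition well_order (O : Type) (lt : O -> O -> Prop) : Prop :=
  strict_linear_order lt /\ well_founded lt.

(** [b] is the immediate predecessor of [a], i.e. [a = b + 1]. *)
Definition is_succ_of (O : Type) (lt : O -> O -> Prop) (a b : O) : Prop :=
  lt b a /\ forall g, ~ (lt b g /\ lt g a).

Definition is_zero (O : Type) (lt : O -> O -> Prop) (a : O) : Prop :=
  forall b, ~ lt b a.

Definition is_limit (O : Type) (lt : O -> O -> Prop) (a : O) : Prop :=
  ~ is_zero lt a /\ forall b, lt b a -> exists g, lt b g /\ lt g a.

(** A prime extension of the finite suborder [A] of [X] is a finite linear
    order [(T, ltT)] together with an embedding [e] of [A] onto a suborder of
    [T] (so [A <= T] up to the identification along [e]) such that exactly
    one point of [T] lies outside the image of [e]. *)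
Definition prime_extension (X : Type) (ltX : X -> X -> Prop) (A : X -> Prop)
  (T : Type) (ltT : T -> T -> Prop) (e : {x : X | A x} -> T) : Prop :=
  strict_linear_order ltT /\ finite_type T /\
  (forall u v, ltT (e u) (e v) <-> ltX (proj1_sig u) (proj1_sig v)) /\
  (exists t0 : T, forall t, t <> t0 <-> exists u, e u = t).

Definition realization (X : Type) (ltX : X -> X -> Prop) (A : X -> Prop)
  (T : Type) (ltT : T -> T -> Prop) (e : {x : X | A x} -> T)
  (C : X -> Prop) : Prop :=
  finite_set C /\ (forall x, A x -> C x) /\
  exists phi : T -> {x : X | C x},
    (forall t t', phi t = phi t' -> t = t') /\
    (forall c, exists t, phi t = c) /\
    (forall t t', ltT t t' <-> ltX (proj1_sig (phi t)) (proj1_sig (phi t'))) /\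
    (forall u, proj1_sig (phi (e u)) = proj1_sig u).

(** Defined by the recursion of the paper (zero / successor / limit cases);
    over a well-order the least fixed point below is the recursive definition. *)
Inductive rk_ge (X : Type) (ltX : X -> X -> Prop) (O : Type)
    (ltO : O -> O -> Prop) : (X -> Prop) -> O -> Prop :=
| rk_ge_zero : forall F a, is_zero ltO a -> rk_ge ltX ltO F a
| rk_ge_succ : forall F a b, is_succ_of ltO a b ->
    (forall (T : Type) (ltT : T -> T -> Prop) (e : {x : X | F x} -> T),
        prime_extension ltX F ltT e ->
        exists C, realization ltX F ltT e C /\ rk_ge ltX ltO C b) ->
    rk_ge ltX ltO F a
| rk_ge_limit : forall F a, is_limit ltO a ->
    (forall b, ltO b a -> rk_ge ltX ltO F b) ->
    rk_ge ltX ltO F a.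

Definition rk_struct_ge (X : Type) (ltX : X -> X -> Prop) (O : Type)
    (ltO : O -> O -> Prop) (a : O) : Prop :=
  rk_ge ltX ltO (fun _ : X => False) a.

(** * Intervals of F = {a_0 < ... < a_{m-1}} (given as the sorted list [l]) *)
Definition in_interval (Y : Type) (ltY : Y -> Y -> Prop) (l : list Y)
    (j : nat) (y : Y) : Prop :=
  (match j with 0 => True | S k => ltY (nth k l y) y end) /\
  ((j < length l)%nat -> ltY y (nth j l y)).

Definition interval_type (Y : Type) (ltY : Y -> Y -> Prop) (l : list Y)
    (j : nat) : Type := {y : Y | in_interval ltY l j y}.

Definition interval_lt (Y : Type) (ltY : Y -> Y -> Prop) (l : list Y)
    (j : nat) (u v : interval_type ltY l j) : Prop :=
  ltY (proj1_sig u) (proj1_sig v).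

(* Main.v *)
Require Import Defs.
From Stdlib Require Import List Sorted Classical FunctionalExtensionality PropExtensionality ClassicalEpsilon Lia.
Import ListNotations.
Set Implicit Arguments.

Lemma sig_eq (X : Type) (P : X -> Prop) (u v : {x | P x}) :
  proj1_sig u = proj1_sig v -> u = v.
Proof. destruct u as [x p], v as [y q]; simpl; intros ->. f_equal. apply proof_irrelevance. Qed.

Lemma pred_ext (X : Type) (P Q : X -> Prop) : (forall x, P x <-> Q x) -> P = Q.
Proof. intro H. apply functional_extensionality; intro x. apply propositional_extensionality; auto. Qed.

Definition EXT (X : Type) (ltX : X -> X -> Prop) (O : Type) (ltO : O -> O -> Prop)
  (F : X -> Prop) (b : O) : Prop :=
  forall (T : Type) (ltT : T -> T -> Prop) (e : {x : X | F x} -> T),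
    prime_extension ltX F ltT e ->
    exists C, realization ltX F ltT e C /\ rk_ge ltX ltO C b.

Lemma rk_inv (X : Type) (ltX : X -> X -> Prop) (O : Type) (ltO : O -> O -> Prop) F a :
  rk_ge ltX ltO F a ->
  is_zero ltO a \/ (exists b, is_succ_of ltO a b /\ EXT ltX ltO F b) \/
  (is_limit ltO a /\ forall b, ltO b a -> rk_ge ltX ltO F b).
Proof. destruct 1; eauto. Qed.

Lemma ord_cases (O : Type) (ltO : O -> O -> Prop) (a : O) :
  is_zero ltO a \/ (exists b, is_succ_of ltO a b) \/ is_limit ltO a.
Proof.
  destruct (classic (is_zero ltO a)) as [Hz|Hz]; [left; auto|right].
  destruct (classic (exists b, is_succ_of ltO a b)) as [Hs|Hs]; [left; auto|right].
  split; auto. intros b hb. apply NNPP; intro Hn. apply Hs. exists b. split; auto.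
  intros g [h1 h2]. apply Hn. eauto.
Qed.

Lemma succ_unique (O : Type) (ltO : O -> O -> Prop) (HO : well_order ltO) a b b' :
  is_succ_of ltO a b -> is_succ_of ltO a b' -> b = b'.
Proof.
  destruct HO as [[Hirr [Htr Htri]] _]. intros [h1 h2] [h1' h2'].
  destruct (Htri b b') as [H|[H|H]]; auto.
  - exfalso; apply (h2 b'); auto.
  - exfalso; apply (h2' b); auto.
Qed.

Lemma rk_mono (X : Type) (ltX : X -> X -> Prop) (O : Type) (ltO : O -> O -> Prop)
  (HO : well_order ltO) :
  forall a F, rk_ge ltX ltO F a -> forall b, ltO b a -> rk_ge ltX ltO F b.
Proof.
  pose proof HO as HO'.
  destruct HO as [[Hirr [Htr Htri]] Hwf].
  intro a. induction a as [a IH] using (well_founded_ind Hwf).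
  intros F H b Hb.
  destruct (rk_inv H) as [Hz|[[a0 [Hs Hext]]|[Hl Hall]]].
  - exfalso; exact (Hz b Hb).
  - assert (Hle : b = a0 \/ ltO b a0).
    { destruct (Htri b a0) as [h|[h|h]]; auto. exfalso. apply (proj2 Hs b); auto. }
    clear Hb. revert Hle. induction b as [b IHb] using (well_founded_ind Hwf). intros Hle.
    destruct (ord_cases ltO b) as [Hz|[[b1 Hs1]|Hl1]].
    + apply rk_ge_zero; auto.
    + eapply rk_ge_succ; [exact Hs1|]. intros T ltT e Hpe.
      destruct (Hext T ltT e Hpe) as [C [HC1 HC2]]. exists C; split; auto.
      apply (IH a0 (proj1 Hs) C HC2).
      destruct Hle as [->|h]; [exact (proj1 Hs1)| eapply Htr; [exact (proj1 Hs1)|exact h]].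
    + apply rk_ge_limit; auto. intros b2 hb2. apply IHb; auto. right.
      destruct Hle as [->|h]; auto. eapply Htr; eauto.
  - apply Hall; auto.
Qed.

Lemma inj_of_order (T X : Type) (ltT : T -> T -> Prop) (ltX : X -> X -> Prop)
  (HT : strict_linear_order ltT) (HXirr : forall x, ~ ltX x x) (psi : T -> X) :
  (forall t t', ltT t t' <-> ltX (psi t) (psi t')) ->
  forall t t', psi t = psi t' -> t = t'.
Proof.
  destruct HT as [_ [_ Htri]]. intros H t t' E.
  destruct (Htri t t') as [h|[h|h]]; auto; exfalso.
  - apply H in h. rewrite E in h. exact (HXirr _ h).
  - apply H in h. rewrite E in h. exact (HXirr _ h).
Qed.

Lemma rk_iso (X X' : Type) (ltX : X -> X -> Prop) (ltX' : X' -> X' -> Prop)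
  (O : Type) (ltO : O -> O -> Prop) (HO : well_order ltO)
  (f : X -> X') (g : X' -> X) (gf : forall x, g (f x) = x) (fg : forall y, f (g y) = y)
  (Hf : forall x y, ltX x y <-> ltX' (f x) (f y)) :
  forall a F G, (forall x, F x <-> G (f x)) -> rk_ge ltX ltO F a -> rk_ge ltX' ltO G a.
Proof.
  pose proof HO as HO'.
  destruct HO as [[Hirr [Htr Htri]] Hwf].
  intro a. induction a as [a IH] using (well_founded_ind Hwf).
  intros F G HFG H.
  destruct (rk_inv H) as [Hz|[[b [Hs Hext]]|[Hl Hall]]].
  - apply rk_ge_zero; auto.
  - eapply rk_ge_succ; [exact Hs|]. intros T ltT e' Hpe.
    set (e := fun u : {x | F x} => e' (exist G (f (proj1_sig u)) (proj1 (HFG _) (proj2_sig u)))).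
    assert (HGF : forall y, G y -> F (g y)).
    { intros y hy. apply HFG. rewrite fg. exact hy. }
    assert (He : forall w : {y | G y}, e (exist F (g (proj1_sig w)) (HGF _ (proj2_sig w))) = e' w).
    { intro w. unfold e. f_equal. apply sig_eq. simpl. apply fg. }
    destruct Hpe as [HTl [HTf [Hord [t0 Ht0]]]].
    assert (Hpe2 : prime_extension ltX F ltT e).
    { split; [|split; [|split]]; auto.
      - intros u v. unfold e. rewrite Hord. simpl. rewrite <- Hf. tauto.
      - exists t0. intro t. rewrite Ht0. split.
        + intros [w Hw]. eexists. rewrite He. exact Hw.
        + intros [u Hu]. eexists. exact Hu. }
    destruct (Hext T ltT e Hpe2) as [C [[Cfin [FC [phi [Hinj [Hsur [Hphio Hphie]]]]]] HrC]].
    exists (fun y => C (g y)). split.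
    + destruct Cfin as [lc Hlc]. split; [|split].
      * exists (map f lc). intro y. rewrite in_map_iff, Hlc. split.
        -- intro h. exists (g y). auto.
        -- intros [x [<- hx]]. rewrite gf. exact hx.
      * intros y hy. apply FC. apply HGF; auto.
      * assert (HC' : forall x, C x -> C (g (f x))) by (intros x hx; rewrite gf; exact hx).
        exists (fun t => exist (fun y => C (g y)) (f (proj1_sig (phi t))) (HC' _ (proj2_sig (phi t)))).
        split; [|split; [|split]].
        -- intros t t' E. apply Hinj. apply sig_eq.
           apply (f_equal (fun w => g (proj1_sig w))) in E. simpl in E. rewrite !gf in E. exact E.
        -- intros [y hy]. destruct (Hsur (exist C (g y) hy)) as [t Ht]. exists t. apply sig_eq. simpl.
           rewrite Ht. simpl. apply fg.
        -- intros t t'. simpl. rewrite <- Hf. apply Hphio.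
        -- intros w. simpl. rewrite <- He. rewrite Hphie. simpl. apply fg.
    + apply (IH b (proj1 Hs) C); auto. intro x. rewrite gf. tauto.
  - apply rk_ge_limit; auto. intros b hb. apply (IH b hb F G HFG). apply Hall; auto.
Qed.

Lemma rk_ext (X : Type) (ltX : X -> X -> Prop) (O : Type) (ltO : O -> O -> Prop) F G a :
  (forall x, F x <-> G x) -> rk_ge ltX ltO F a -> rk_ge ltX ltO G a.
Proof. intros H. rewrite (pred_ext F G H). auto. Qed.

Definition cut (X : Type) (ltX : X -> X -> Prop) (F D : X -> Prop) : Prop :=
  (forall a, D a -> F a) /\ (forall a b, F a -> D b -> ltX a b -> D a).

Definition Int (X : Type) (ltX : X -> X -> Prop) (F D : X -> Prop) (y : X) : Prop :=
  ~ F y /\ forall a, F a -> (ltX a y <-> D a).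

Lemma fin_sig_gen (X : Type) (l : list X) : forall (F : X -> Prop),
  (forall x, F x -> In x l) -> exists L : list {x | F x}, forall u, In u L.
Proof.
  induction l as [|a l IH]; intros F HF.
  - exists nil. intros [x hx]. destruct (HF x hx).
  - destruct (IH (fun x => F x /\ x <> a)) as [L HL].
    { intros x [hx hne]. destruct (HF x hx); [congruence|auto]. }
    set (inj := fun w : {x | F x /\ x <> a} => exist F (proj1_sig w) (proj1 (proj2_sig w))).
    destruct (classic (F a)) as [Ha|Ha].
    + exists (exist F a Ha :: map inj L). intros [x hx].
      destruct (classic (x = a)) as [->|hne].
      * left. apply sig_eq; reflexivity.
      * right. apply in_map_iff. exists (exist _ x (conj hx hne)). split; auto. apply sig_eq; reflexivity.
    + exists (map inj L). intros [x hx].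
      assert (hne : x <> a) by (intro; subst; contradiction).
      apply in_map_iff. exists (exist _ x (conj hx hne)). split; auto. apply sig_eq; reflexivity.
Qed.

Lemma fin_sig (X : Type) (F : X -> Prop) : finite_set F -> exists L : list {x | F x}, forall u, In u L.
Proof. intros [l Hl]. apply (fin_sig_gen l). intros x hx. apply Hl; auto. Qed.

Definition optlt (X : Type) (ltX : X -> X -> Prop) (F D : X -> Prop)
  (o1 o2 : option {x | F x}) : Prop :=
  match o1, o2 with
  | Some u, Some v => ltX (proj1_sig u) (proj1_sig v)
  | Some u, None => D (proj1_sig u)
  | None, Some v => ~ D (proj1_sig v)
  | None, None => False
  end.

Lemma optlt_lin (X : Type) (ltX : X -> X -> Prop) (HX : strict_linear_order ltX) F D :
  cut ltX F D -> strict_linear_order (optlt ltX F D).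
Proof.
  destruct HX as [Hirr [Htr Htri]]. intros [HDF HDc].
  split; [|split].
  - intros [u|]; simpl; auto.
  - intros [u|] [v|] [w|]; simpl; intros h1 h2; try tauto.
    + eauto.
    + eapply HDc; eauto. apply (proj2_sig u).
    + destruct (Htri (proj1_sig u) (proj1_sig w)) as [h|[h|h]]; auto.
      * rewrite h in h1. contradiction.
      * exfalso. apply h2. eapply HDc; eauto. apply (proj2_sig w).
    + intro hw. apply h1. eapply HDc; eauto. apply (proj2_sig v).
  - intros [u|] [v|]; simpl.
    + destruct (Htri (proj1_sig u) (proj1_sig v)) as [h|[h|h]]; auto.
      right; left. f_equal. apply sig_eq; auto.
    + destruct (classic (D (proj1_sig u))); tauto.
    + destruct (classic (D (proj1_sig v))); tauto.
    + auto.
Qed.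

Lemma choice_fun (A B : Type) (R : A -> B -> Prop) :
  (forall a, exists b, R a b) -> exists f : A -> B, forall a, R a (f a).
Proof.
  intro H. exists (fun a => proj1_sig (constructive_indefinite_description _ (H a))).
  intro a. exact (proj2_sig (constructive_indefinite_description _ (H a))).
Qed.

Lemma ext_cut (X : Type) (ltX : X -> X -> Prop) (O : Type) (ltO : O -> O -> Prop)
  (HX : strict_linear_order ltX) (F : X -> Prop) (Hfin : finite_set F) (b : O) :
  EXT ltX ltO F b <->
  (forall D, cut ltX F D -> exists c, Int ltX F D c /\ rk_ge ltX ltO (fun x => F x \/ x = c) b).
Proof.
  pose proof HX as HX'. destruct HX' as [Hirr [Htr Htri]].
  split.
  - intros H D HD.
    destruct (fin_sig Hfin) as [L HL].
    assert (Hpe : prime_extension ltX F (optlt ltX F D) (@Some _)).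
    { split; [apply optlt_lin; auto|split; [|split]].
      - exists (None :: map (@Some _) L). intros [u|]; [right; apply in_map; auto|left; auto].
      - intros u v; simpl; tauto.
      - exists None. intros [u|]; split; intro h.
        + eauto.
        + congruence.
        + exfalso; apply h; reflexivity.
        + destruct h as [u hu]; discriminate. }
    destruct (H _ _ _ Hpe) as [C [[Cfin [FC [phi [Hinj [Hsur [Hphio Hphie]]]]]] HrC]].
    exists (proj1_sig (phi None)).
    assert (HI : Int ltX F D (proj1_sig (phi None))).
    { split.
      - intro hF. assert (E : phi (Some (exist F _ hF)) = phi None).
        { apply sig_eq. rewrite Hphie. reflexivity. }
        apply Hinj in E. discriminate.
      - intros a ha. pose proof (Hphio (Some (exist F a ha)) None) as h.
        rewrite Hphie in h. simpl in h. tauto. }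
    split; auto.
    eapply rk_ext; [|exact HrC]. intro x. split.
    + intro hx. destruct (Hsur (exist C x hx)) as [[u|] Ht].
      * left. apply (f_equal (@proj1_sig _ _)) in Ht. simpl in Ht.
        rewrite <- Ht, Hphie. apply (proj2_sig u).
      * right. rewrite Ht. reflexivity.
    + intros [hx| ->]; auto. apply (proj2_sig (phi None)).
  - intros H T ltT e [HTl [HTf [Hord [t0 Ht0]]]].
    pose proof HTl as HTl'. destruct HTl' as [HTirr [HTtr HTtri]].
    assert (Heinj : forall u v, e u = e v -> u = v).
    { intros u v E. apply sig_eq. destruct (Htri (proj1_sig u) (proj1_sig v)) as [h|[h|h]]; auto; exfalso.
      - apply Hord in h. rewrite E in h. exact (HTirr _ h).
      - apply Hord in h. rewrite E in h. exact (HTirr _ h). }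
    set (D := fun a => exists h : F a, ltT (e (exist F a h)) t0).
    assert (HD : cut ltX F D).
    { split.
      - intros a [h _]; exact h.
      - intros a a' ha [ha' h'] hlt. exists ha. eapply HTtr; [|exact h'].
        apply Hord. exact hlt. }
    destruct (H D HD) as [c [[HcF HcI] Hrk]].
    assert (HDu : forall u, D (proj1_sig u) <-> ltT (e u) t0).
    { intros u. unfold D. split.
      - intros [h h']. replace u with (exist F (proj1_sig u) h); auto. apply sig_eq; reflexivity.
      - intro h. exists (proj2_sig u). replace (exist F (proj1_sig u) (proj2_sig u)) with u; auto.
        apply sig_eq; reflexivity. }
    set (C := fun x => F x \/ x = c).
    assert (Hex : forall t, exists w : {x | C x},
               (t = t0 /\ proj1_sig w = c) \/ (exists u, e u = t /\ proj1_sig w = proj1_sig u)).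
    { intro t. destruct (classic (t = t0)) as [->|hne].
      - exists (exist C c (or_intror eq_refl)). left; auto.
      - destruct (proj1 (Ht0 t) hne) as [u hu].
        exists (exist C (proj1_sig u) (or_introl (proj2_sig u))). right; eauto. }
    destruct (choice_fun _ Hex) as [phi Hphi].
    assert (Pt0 : proj1_sig (phi t0) = c).
    { destruct (Hphi t0) as [[_ h]|[u [hu _]]]; auto.
      exfalso. apply (proj2 (Ht0 (e u))); eauto. }
    assert (Pe : forall u, proj1_sig (phi (e u)) = proj1_sig u).
    { intro u. destruct (Hphi (e u)) as [[h _]|[u' [hu h]]].
      - exfalso. apply (proj2 (Ht0 (e u))); eauto.
      - apply Heinj in hu. rewrite hu in h. exact h. }
    assert (Hcases : forall t, t = t0 \/ exists u, e u = t).
    { intro t. destruct (classic (t = t0)); auto. right. apply Ht0; auto. }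
    assert (Hne : forall u, e u <> t0).
    { intros u h. apply (proj2 (Ht0 (e u))); eauto. }
    assert (Hphio : forall t t', ltT t t' <-> ltX (proj1_sig (phi t)) (proj1_sig (phi t'))).
    { intros t t'.
      destruct (Hcases t) as [->|[u <-]]; destruct (Hcases t') as [->|[v <-]];
        rewrite ?Pt0, ?Pe.
      - split; intro h; exfalso; [exact (HTirr _ h)|exact (Hirr _ h)].
      - assert (hv := HcI _ (proj2_sig v)). rewrite HDu in hv. split.
        + intro h. destruct (Htri c (proj1_sig v)) as [h'|[h'|h']]; auto; exfalso.
          * apply HcF. rewrite h'. apply (proj2_sig v).
          * apply hv in h'. exact (HTirr _ (HTtr _ _ _ h h')).
        + intro h. destruct (HTtri t0 (e v)) as [h'|[h'|h']]; auto; exfalso.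
          * apply (Hne v); auto.
          * apply hv in h'. exact (Hirr _ (Htr _ _ _ h h')).
      - rewrite (HcI _ (proj2_sig u)). rewrite HDu. tauto.
      - apply Hord. }
    exists C. split.
    + split; [|split].
      * destruct Hfin as [l Hl]. exists (c :: l). intro x. unfold C. simpl. rewrite Hl. intuition congruence.
      * intros x hx. left; auto.
      * exists phi. split; [|split; [|split]]; auto.
        -- intros t t' E. apply (@inj_of_order T X ltT ltX HTl Hirr (fun t => proj1_sig (phi t)) Hphio).
           rewrite E; auto.
        -- intros [x [hx|hx]].
           ++ exists (e (exist F x hx)). apply sig_eq. rewrite Pe. reflexivity.
           ++ exists t0. apply sig_eq. rewrite Pt0. simpl. auto.
    + exact Hrk.
Qed.

Definition sublt (X : Type) (ltX : X -> X -> Prop) (P : X -> Prop) (u v : {x | P x}) : Prop :=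
  ltX (proj1_sig u) (proj1_sig v).

Definition RK (X : Type) (ltX : X -> X -> Prop) (O : Type) (ltO : O -> O -> Prop)
  (P : X -> Prop) (a : O) : Prop := rk_struct_ge (sublt ltX P) ltO a.

Lemma RK_ext (X : Type) (ltX : X -> X -> Prop) (O : Type) (ltO : O -> O -> Prop) P Q a :
  (forall x, P x <-> Q x) -> RK ltX ltO P a -> RK ltX ltO Q a.
Proof. intros H. rewrite (pred_ext P Q H). auto. Qed.

Lemma RK_sub (X : Type) (ltX : X -> X -> Prop) (O : Type) (ltO : O -> O -> Prop)
  (HO : well_order ltO) (P : X -> Prop) (Q : {y | P y} -> Prop) (R : X -> Prop)
  (HQR : forall y (h : P y), Q (exist P y h) <-> R y) (HRP : forall y, R y -> P y) a :
  RK (sublt ltX P) ltO Q a <-> RK ltX ltO R a.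
Proof.
  assert (HQR' : forall w, Q w <-> R (proj1_sig w)) by (intros [y h]; apply HQR).
  set (f := fun z : {w | Q w} => exist R (proj1_sig (proj1_sig z)) (proj1 (HQR' _) (proj2_sig z))).
  set (g := fun w : {y | R y} => exist Q (exist P (proj1_sig w) (HRP _ (proj2_sig w)))
 (proj2 (HQR' (exist P (proj1_sig w) (HRP _ (proj2_sig w)))) (proj2_sig w))).
  assert (gf : forall z, g (f z) = z) by (intro z; apply sig_eq; apply sig_eq; reflexivity).
  assert (fg : forall w, f (g w) = w) by (intro w; apply sig_eq; reflexivity).
  unfold RK, rk_struct_ge. split.
  - apply (@rk_iso _ _ _ _ O ltO HO f g gf fg); [intros; reflexivity|tauto].
  - apply (@rk_iso _ _ _ _ O ltO HO g f fg gf); [intros; reflexivity|tauto].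
Qed.

Lemma succ_iff (X : Type) (ltX : X -> X -> Prop) (O : Type) (ltO : O -> O -> Prop)
  (HO : well_order ltO) F a b :
  is_succ_of ltO a b -> (rk_ge ltX ltO F a <-> EXT ltX ltO F b).
Proof.
  intros Hs. split.
  - intro H. destruct (rk_inv H) as [Hz|[[b' [Hs' He]]|[Hl _]]].
    + exfalso. exact (Hz b (proj1 Hs)).
    + rewrite (succ_unique HO Hs Hs'). exact He.
    + exfalso. destruct (proj2 Hl b (proj1 Hs)) as [g [h1 h2]]. apply (proj2 Hs g); auto.
  - intro H. eapply rk_ge_succ; [exact Hs|exact H].
Qed.

Lemma cut_empty (X : Type) (ltX : X -> X -> Prop) : cut ltX (fun _ => False) (fun _ => False).
Proof. split; intros; tauto. Qed.

Lemma fin_empty (X : Type) : finite_set (fun _ : X => False).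
Proof. exists nil. intro; simpl; tauto. Qed.

Lemma fin_add (X : Type) (F : X -> Prop) c : finite_set F -> finite_set (fun x => F x \/ x = c).
Proof. intros [l Hl]. exists (c :: l). intro x. simpl. rewrite Hl. intuition congruence. Qed.

Lemma sublt_lin (X : Type) (ltX : X -> X -> Prop) (HX : strict_linear_order ltX) P :
  strict_linear_order (sublt ltX P).
Proof.
  destruct HX as [Hirr [Htr Htri]]. unfold sublt. split; [|split].
  - intros x; apply Hirr.
  - intros x y z; apply Htr.
  - intros x y. destruct (Htri (proj1_sig x) (proj1_sig y)) as [h|[h|h]]; auto.
    right; left. apply sig_eq; auto.
Qed.

Definition MAINP (O : Type) (ltO : O -> O -> Prop) (b : O) : Prop :=
  forall (X : Type) (ltX : X -> X -> Prop), strict_linear_order ltX ->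
  forall F, finite_set F ->
  (rk_ge ltX ltO F b <-> forall D, cut ltX F D -> RK ltX ltO (Int ltX F D) b).

Lemma stepA (X : Type) (ltX : X -> X -> Prop) (O : Type) (ltO : O -> O -> Prop)
  (HO : well_order ltO) (HX : strict_linear_order ltX) F D a b
  (Hs : is_succ_of ltO a b) (IH : MAINP ltO b) :
  RK ltX ltO (Int ltX F D) a <->
  exists c, Int ltX F D c /\ RK ltX ltO (fun y => Int ltX F D y /\ ltX y c) b
                          /\ RK ltX ltO (fun y => Int ltX F D y /\ ltX c y) b.
Proof.
  pose proof HX as HX'. destruct HX' as [Hirr [Htr Htri]].
  set (P := Int ltX F D).
  set (ltS := sublt ltX P).
  assert (HS : strict_linear_order ltS) by apply sublt_lin, HX.
  unfold RK at 1, rk_struct_ge. fold ltS.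
  rewrite (@succ_iff _ ltS _ ltO HO _ a b Hs).
  rewrite (@ext_cut _ ltS _ ltO HS _ (fin_empty _)).
  assert (Hc : forall c' : {y | P y},
    rk_ge ltS ltO (fun z => z = c') b <->
    RK ltX ltO (fun y => P y /\ ltX y (proj1_sig c')) b /\
    RK ltX ltO (fun y => P y /\ ltX (proj1_sig c') y) b).
  { intro c'. rewrite (IH _ ltS HS).
    2:{ exists [c']. intro z. simpl. intuition congruence. }
    assert (E1 : forall D', cut ltS (fun z => z = c') D' -> D' c' ->
              (RK ltS ltO (Int ltS (fun z => z = c') D') b <->
               RK ltX ltO (fun y => P y /\ ltX (proj1_sig c') y) b)).
    { intros D' HD' Hc'. apply RK_sub; auto; [|tauto].
      intros y h. unfold Int, ltS, sublt. simpl. split.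
      - intros [h1 h2]. split; auto. apply (h2 c' eq_refl). auto.
      - intros [_ h1]. split.
        + intro E. rewrite <- E in h1. simpl in h1. exact (Hirr _ h1).
        + intros a0 ->. tauto. }
    assert (E2 : forall D', cut ltS (fun z => z = c') D' -> ~ D' c' ->
              (RK ltS ltO (Int ltS (fun z => z = c') D') b <->
               RK ltX ltO (fun y => P y /\ ltX y (proj1_sig c')) b)).
    { intros D' HD' Hc'. apply RK_sub; auto; [|tauto].
      intros y h. unfold Int, ltS, sublt. simpl. split.
      - intros [h1 h2]. split; auto.
        destruct (Htri y (proj1_sig c')) as [k|[k|k]]; auto; exfalso.
        + apply h1. apply sig_eq. auto.
        + apply Hc'. apply (h2 c' eq_refl). auto.
      - intros [_ h1]. split.
        + intro E. rewrite <- E in h1. simpl in h1. exact (Hirr _ h1).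
        + intros a0 ->. split; [|tauto]. intro k. exfalso. exact (Hirr _ (Htr _ _ _ k h1)). }
    split.
    - intro H. split.
      + assert (Hc0 : cut ltS (fun z => z = c') (fun _ => False)) by (split; intros; tauto).
        apply (proj1 (E2 _ Hc0 (fun x => x))). apply H; exact Hc0.
      + assert (Hc1 : cut ltS (fun z => z = c') (fun z => z = c')).
        { split; auto. }
        apply (proj1 (E1 _ Hc1 eq_refl)). apply H; exact Hc1.
    - intros [H1 H2] D' HD'. destruct (classic (D' c')).
      + apply (E1 D'); auto.
      + apply (E2 D'); auto. }
  split.
  - intro H. destruct (H _ (cut_empty _)) as [c' [_ Hr]].
    apply (@rk_ext _ ltS _ ltO _ (fun z => z = c') b) in Hr; [|intro; tauto].
    apply Hc in Hr. exists (proj1_sig c'). split; [apply (proj2_sig c')|exact Hr].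
  - intros [c [Pc Hr]] D' HD'. exists (exist P c Pc). split.
    + split; [tauto|]. intros; tauto.
    + eapply rk_ext; [|apply (proj2 (Hc (exist P c Pc))); exact Hr]. simpl. intro; tauto.
Qed.

Lemma stepB1 (X : Type) (ltX : X -> X -> Prop) (O : Type) (ltO : O -> O -> Prop)
  (HX : strict_linear_order ltX) F D c b (HD : cut ltX F D) (Hc : Int ltX F D c)
  (H : forall D', cut ltX (fun x => F x \/ x = c) D' ->
        RK ltX ltO (Int ltX (fun x => F x \/ x = c) D') b) :
  RK ltX ltO (fun y => Int ltX F D y /\ ltX y c) b /\
  RK ltX ltO (fun y => Int ltX F D y /\ ltX c y) b.
Proof.
  destruct HX as [Hirr [Htr Htri]]. destruct HD as [HDF HDc]. destruct Hc as [HcF HcI].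
  split.
  - eapply RK_ext; [|apply H].
    + intro y. unfold Int. split.
      * intros [h1 h2]. split; [split|].
        -- intuition.
        -- intros a0 ha. apply h2; auto.
        -- destruct (Htri y c) as [k|[k|k]]; auto; exfalso.
           ++ apply h1; auto.
           ++ apply HcF. apply HDF. apply (h2 c); auto.
      * intros [[h1 h2] h3]. split.
        -- intros [k|k]; auto. subst. exact (Hirr _ h3).
        -- intros a0 [ha| ->]; auto. split; intro k; exfalso.
           ++ exact (Hirr _ (Htr _ _ _ k h3)).
           ++ apply HcF; auto.
    + split; auto. intros a0 b0 [ha| ->] hb k; eauto.
      exfalso. assert (ltX b0 c) by (apply HcI; auto). exact (Hirr _ (Htr _ _ _ k H0)).
  - eapply RK_ext; [|apply (H (fun x => D x \/ x = c))].
    + intro y. unfold Int. split.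
      * intros [h1 h2]. split; [split|].
        -- intuition.
        -- intros a0 ha. rewrite (h2 a0 (or_introl ha)). split; [intros [k| ->]; auto|auto].
           exfalso; auto.
        -- apply (h2 c); auto.
      * intros [[h1 h2] h3]. split.
        -- intros [k|k]; auto. subst. exact (Hirr _ h3).
        -- intros a0 [ha| ->].
           ++ rewrite (h2 a0 ha). split; auto. intros [k| ->]; auto. contradiction.
           ++ tauto.
    + split.
      * intros a0 [k| ->]; auto.
      * intros a0 b0 [ha| ->] [hb| ->] k; eauto.
        left. apply HcI; auto.
Qed.

Lemma RK_mono (X : Type) (ltX : X -> X -> Prop) (O : Type) (ltO : O -> O -> Prop)
  (HO : well_order ltO) P a b : ltO b a -> RK ltX ltO P a -> RK ltX ltO P b.
Proof. intros h H. unfold RK, rk_struct_ge in *. eapply rk_mono; eauto. Qed.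

Lemma stepB2 (X : Type) (ltX : X -> X -> Prop) (O : Type) (ltO : O -> O -> Prop)
  (HO : well_order ltO) (HX : strict_linear_order ltX) F D c a b (Hba : ltO b a)
  (HD : cut ltX F D) (Hc : Int ltX F D c)
  (Hall : forall D'', cut ltX F D'' -> RK ltX ltO (Int ltX F D'') a)
  (H1 : RK ltX ltO (fun y => Int ltX F D y /\ ltX y c) b)
  (H2 : RK ltX ltO (fun y => Int ltX F D y /\ ltX c y) b) :
  forall D', cut ltX (fun x => F x \/ x = c) D' ->
        RK ltX ltO (Int ltX (fun x => F x \/ x = c) D') b.
Proof.
  destruct HX as [Hirr [Htr Htri]]. destruct HD as [HDF HDc]. destruct Hc as [HcF HcI].
  intros D' [HD'F HD'c].
  set (D'' := fun x => F x /\ D' x).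
  assert (HD'' : cut ltX F D'').
  { split.
    - intros a0 [h _]; auto.
    - intros a0 b0 ha [hb hb'] k. split; auto. eapply HD'c; eauto. }
  assert (R'' := @RK_mono _ ltX _ ltO HO _ a b Hba (Hall D'' HD'')).
  assert (Back : forall y, Int ltX (fun x => F x \/ x = c) D' y -> Int ltX F D'' y).
  { intros y [h1 h2]. split; auto. intros a0 ha. rewrite (h2 a0 (or_introl ha)).
    unfold D''. tauto. }
  assert (Fwd : forall y, Int ltX F D'' y -> y <> c -> (ltX c y <-> D' c) ->
                Int ltX (fun x => F x \/ x = c) D' y).
  { intros y [h1 h2] hne hc. split.
    - intros [k|k]; auto.
    - intros a0 [ha| ->]; auto. rewrite (h2 a0 ha). unfold D''. tauto. }
  destruct (classic (forall x, F x -> (D' x <-> D x))) as [Eq|Neq].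
  - destruct (classic (D' c)) as [Dc|nDc].
    + eapply RK_ext; [|exact H2]. intro y. split.
      * intros [[h1 h2] h3]. split.
        -- intros [k|k]; auto. subst. exact (Hirr _ h3).
        -- intros a0 [ha| ->]; [|tauto]. rewrite (h2 a0 ha). symmetry. auto.
      * intros [h1 h2]. split; [split|].
        -- auto.
        -- intros a0 ha. rewrite (h2 a0 (or_introl ha)). auto.
        -- apply (h2 c); auto.
    + eapply RK_ext; [|exact H1]. intro y. split.
      * intros [[h1 h2] h3]. split.
        -- intros [k|k]; auto. subst. exact (Hirr _ h3).
        -- intros a0 [ha| ->].
           ++ rewrite (h2 a0 ha). symmetry. auto.
           ++ split; intro k; exfalso; [exact (Hirr _ (Htr _ _ _ h3 k))|auto].
      * intros [h1 h2]. split; [split|].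
        -- auto.
        -- intros a0 ha. rewrite (h2 a0 (or_introl ha)). auto.
        -- destruct (Htri y c) as [k|[k|k]]; auto; exfalso.
           ++ apply h1; auto.
           ++ apply nDc. apply (h2 c); auto.
  - apply not_all_ex_not in Neq. destruct Neq as [x Hx].
    apply imply_to_and in Hx. destruct Hx as [Fx Hx].
    eapply RK_ext; [|exact R'']. intro y. split; [|apply Back].
    intro Hy. pose proof Hy as [h1 h2].
    destruct (classic (D' x)) as [D'x|nD'x]; destruct (classic (D x)) as [Dx|nDx];
      try (exfalso; apply Hx; tauto).
    + assert (cx : ltX c x).
      { destruct (Htri x c) as [k|[k|k]]; auto; exfalso.
        - apply nDx. apply HcI; auto.
        - apply HcF. rewrite <- k. auto. }
      assert (Dc : D' c) by (eapply HD'c; eauto).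
      assert (xy : ltX x y) by (apply h2; unfold D''; auto).
      apply Fwd; auto.
      * intro E. subst. exact (Hirr _ (Htr _ _ _ cx xy)).
      * split; auto. intros _. eauto.
    + assert (xc : ltX x c) by (apply HcI; auto).
      assert (nDc : ~ D' c).
      { intro Dc. apply nD'x. eapply HD'c; eauto. }
      apply Fwd; auto.
      * intro E. subst. apply nD'x. apply (proj1 (h2 x Fx) xc).
      * split; intro k; exfalso; auto.
        apply nD'x. apply (proj1 (h2 x Fx) (Htr _ _ _ xc k)).
Qed.

Lemma main_lemma (O : Type) (ltO : O -> O -> Prop) (HO : well_order ltO) :
  forall a, MAINP ltO a.
Proof.
  pose proof HO as HO'. destruct HO' as [[Hirr [Htr Htri]] Hwf].
  intro a. induction a as [a IH] using (well_founded_ind Hwf).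
  intros X ltX HX F Hfin.
  destruct (ord_cases ltO a) as [Hz|[[b Hs]|Hl]].
  - split; intros; apply rk_ge_zero; auto.
  - rewrite (@succ_iff _ ltX _ ltO HO _ a b Hs).
    rewrite (@ext_cut _ ltX _ ltO HX _ Hfin).
    assert (IHb := IH b (proj1 Hs)).
    split.
    + intros H D HD. apply (stepA HO HX F D Hs IHb).
      destruct (H D HD) as [c [Hc Hr]]. exists c. split; auto.
      apply (stepB1 HX HD Hc).
      apply (IHb X ltX HX _ (fin_add c Hfin)). exact Hr.
    + intros H D HD. destruct (proj1 (stepA HO HX F D Hs IHb) (H D HD)) as [c [Hc [H1 H2]]].
      exists c. split; auto.
      apply (IHb X ltX HX _ (fin_add c Hfin)).
      apply (stepB2 HO HX (proj1 Hs) HD Hc H H1 H2).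
  - split.
    + intros H D HD. unfold RK, rk_struct_ge. apply rk_ge_limit; auto.
      intros b hb. apply (IH b hb X ltX HX F Hfin); auto.
      eapply rk_mono; eauto.
    + intros H. apply rk_ge_limit; auto. intros b hb.
      apply (IH b hb X ltX HX F Hfin). intros D HD. eapply RK_mono; eauto.
Qed.

Lemma in_firstn_l (Y : Type) (l : list Y) j a : In a (firstn j l) -> In a l.
Proof. intro h. rewrite <- (firstn_skipn j l). apply in_or_app; auto. Qed.

Lemma SS_app (Y : Type) (ltY : Y -> Y -> Prop) l1 l2 :
  StronglySorted ltY (l1 ++ l2) -> forall a b, In a l1 -> In b l2 -> ltY a b.
Proof.
  induction l1 as [|x l1 IH]; simpl; intros H a b ha hb; [contradiction|].
  inversion H as [|? ? H1 H2]; subst. destruct ha as [<-|ha].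
  - rewrite Forall_forall in H2. apply H2. apply in_or_app; auto.
  - apply IH; auto.
Qed.

Lemma firstn_cut (Y : Type) (ltY : Y -> Y -> Prop) (HY : strict_linear_order ltY) l j :
  StronglySorted ltY l -> cut ltY (fun y => In y l) (fun a => In a (firstn j l)).
Proof.
  destruct HY as [Hirr [Htr Htri]]. intros HS. split.
  - intros a; apply in_firstn_l.
  - intros a b ha hb k. rewrite <- (firstn_skipn j l) in ha, HS.
    apply in_app_or in ha. destruct ha as [ha|ha]; auto. exfalso.
    pose proof (@SS_app _ _ _ _ HS _ _ hb ha). exact (Hirr _ (Htr _ _ _ k H)).
Qed.

Lemma interval_char (Y : Type) (ltY : Y -> Y -> Prop) (HY : strict_linear_order ltY) :
  forall l j y, StronglySorted ltY l -> (j <= length l)%nat ->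
  (in_interval ltY l j y <-> ~ In y l /\ forall b, In b l -> (ltY b y <-> In b (firstn j l))).
Proof.
  pose proof HY as [Hirr [Htr Htri]].
  induction l as [|a l IH]; intros j y HS Hj.
  - simpl in Hj. assert (j = 0) by lia. subst. unfold in_interval. simpl.
    split; [intros _; split; [auto|intros; contradiction]|intros _; split; auto; intro; lia].
  - inversion HS as [|? ? HS1 HS2]; subst. rewrite Forall_forall in HS2.
    destruct j as [|k].
    + unfold in_interval. simpl. split.
      * intros [_ h]. assert (ya : ltY y a) by (apply h; lia). split.
        -- intros [E|E]; [subst; exact (Hirr _ ya)|].
           pose proof (HS2 _ E). exact (Hirr _ (Htr _ _ _ ya H)).
        -- intros b hb; split; [|tauto]. intro k. destruct hb as [<-|hb].
           ++ exact (Hirr _ (Htr _ _ _ k ya)).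
           ++ pose proof (HS2 _ hb). exact (Hirr _ (Htr _ _ _ (Htr _ _ _ k ya) H)).
      * intros [h1 h2]. split; auto. intros _.
        destruct (Htri y a) as [k|[k|k]]; auto; exfalso.
        -- apply h1; auto.
        -- exact (proj1 (h2 a (or_introl eq_refl)) k).
    + simpl in Hj. assert (Hk : (k <= length l)%nat) by lia.
      assert (Step : in_interval ltY (a :: l) (S k) y <-> ltY a y /\ in_interval ltY l k y).
      { unfold in_interval. simpl. destruct k as [|k'].
        - simpl. split.
          + intros [h1 h2]. split; auto. split; auto. intro. apply h2. lia.
          + intros [h1 [_ h2]]. split; auto. intro. apply h2. lia.
        - split.
          + intros [h1 h2]. split; [|split; auto; intro; apply h2; lia].
            destruct (Compare_dec.lt_dec k' (length l)) as [lt|ge].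
            * pose proof (HS2 _ (nth_In l y lt)). eauto.
            * rewrite nth_overflow in h1 by lia. exfalso; exact (Hirr _ h1).
          + intros [h0 [h1 h2]]. split; auto. intro. apply h2. lia. }
      rewrite Step, (IH k y HS1 Hk). simpl. split.
      * intros [ay [h1 h2]]. split.
        -- intros [E|E]; [subst; exact (Hirr _ ay)|auto].
        -- intros b [<-|hb]; [tauto|]. rewrite (h2 b hb). split; [auto|].
           intros [E|E]; auto. subst. exfalso. exact (Hirr _ (HS2 _ hb)).
      * intros [h1 h2]. assert (ay : ltY a y) by (apply h2; auto).
        split; auto. split; [tauto|]. intros b hb. rewrite (h2 b (or_intror hb)).
        split; [|auto]. intros [E|E]; auto. subst. exfalso. exact (Hirr _ (HS2 _ hb)).
Qed.

Lemma cut_is_firstn (Y : Type) (ltY : Y -> Y -> Prop) (HY : strict_linear_order ltY) :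
  forall l D, StronglySorted ltY l -> cut ltY (fun y => In y l) D ->
  exists j, (j <= length l)%nat /\ forall a, In a l -> (D a <-> In a (firstn j l)).
Proof.
  pose proof HY as [Hirr [Htr Htri]].
  induction l as [|a l IH]; intros D HS [HDF HDc].
  - exists 0. simpl. split; [lia|tauto].
  - inversion HS as [|? ? HS1 HS2]; subst. rewrite Forall_forall in HS2.
    destruct (IH (fun x => D x /\ In x l) HS1) as [j [Hj Hjl]].
    { split.
      - intros x [_ h]; auto.
      - intros x y hx [hy hy'] k. split; auto. eapply HDc; eauto. simpl; auto. }
    destruct (classic (D a)) as [Da|nDa].
    + exists (S j). simpl. split; [lia|]. intros x [<-|hx].
      * tauto.
      * rewrite <- (Hjl x hx). split; [tauto|]. intros [<-|h]; tauto.
    + exists 0. simpl. split; [lia|]. intros x [<-|hx]; [tauto|].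
      split; [|tauto]. intro Dx. apply nDa. eapply HDc; eauto. simpl; auto.
Qed.

Theorem proposition6p5
  (Y : Type) (ltY : Y -> Y -> Prop)
  (HY : strict_linear_order ltY) (HYc : countable_type Y)
  (l : list Y) (Hl : Sorted ltY l)
  (O : Type) (ltO : O -> O -> Prop) (HO : well_order ltO) (alpha : O) :
  rk_ge ltY ltO (fun y => In y l) alpha <->
  (forall j : nat, (j <= length l)%nat ->
     rk_struct_ge (@interval_lt Y ltY l j) ltO alpha).
Proof.
  assert (HS : StronglySorted ltY l).
  { apply Sorted_StronglySorted; auto. destruct HY as [_ [Htr _]]. intros x y z; apply Htr. }
  assert (Hfin : finite_set (fun y => In y l)) by (exists l; tauto).
  rewrite (main_lemma HO alpha HY Hfin).
  split.
  - intros H j Hj. change (RK ltY ltO (in_interval ltY l j) alpha).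
    eapply RK_ext; [|apply (H _ (@firstn_cut Y ltY HY l j HS))].
    intro y. rewrite (@interval_char Y ltY HY l j y HS Hj). unfold Int. tauto.
  - intros H D HD. destruct (@cut_is_firstn Y ltY HY l D HS HD) as [j [Hj HjD]].
    eapply RK_ext; [|apply (H j Hj)]. intro y.
    rewrite (@interval_char Y ltY HY l j y HS Hj). unfold Int. split.
    + intros [h1 h2]. split; auto. intros b hb. rewrite (HjD b hb). auto.
    + intros [h1 h2]. split; auto. intros b hb. rewrite <- (HjD b hb). auto.
Qed.
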